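(* Fix $1<p<\infty$. Let $\Omega$ be a probability space and let $D_Y,D_X,E_Y,E_X:\Omega\to\mathbb{R}$, $\lambda,\Theta>0$, and $a,b,\nu,\mu\in(0,1)$ be such that (i) $D_Y,D_X,E_Y,E_X$ are non-negative measurable functions with $D_Y\le E_Y$, $D_X\le E_X$, $D_Y\le\lambda^pD_X$, $E_Y\le\lambda^pE_X$, $D_Y\le(1+\nu)\Theta^pE_X$; (ii) $\mathbb{E}D_Y>(1-\nu)\Theta^p\mathbb{E}E_X$, $\mathbb{E}D_Y>(1-\mu)\mathbb{E}E_Y$, $\mathbb{E}D_X>(1-\mu)\mathbb{E}E_X$; (iii) $\lambda^p\bigl(\frac{2\mu}{a}+\frac{2\nu}{b}\bigr)<\Theta^p(1-\nu)$. Then there exists $\omega\in\Omega$ such that $D_Y(\omega)>(1-a)E_Y(\omega)$, $D_X(\omega)>(1-a)E_X(\omega)$, and $D_Y(\omega)>(1-b)\Theta^pE_X(\omega)$.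
   Context: $\mathbb{E}$ denotes expectation on the probability space $\Omega$. *)

(* Defs.v *)
From HB Require Import structures.
From mathcomp Require Import all_boot all_order all_algebra.
From mathcomp Require Import all_classical all_reals all_analysis.
Set Implicit Arguments. Unset Strict Implicit. Unset Printing Implicit Defensive.

(* Main.v *)
From HB Require Import structures.
From mathcomp Require Import all_boot all_order all_algebra.
From mathcomp Require Import all_classical all_reals all_analysis.
From mathcomp Require Import measurable_realfun.
From mathcomp Require Import ring lra.
Import Order.TTheory GRing.Theory Num.Theory.
Local Open Scope ring_scope.
Local Open Scope ereal_scope.

Lemma int_lin (R : realType) (d : measure_display) (T : measurableType d)
  (P : probability T R) (f g : T -> R) (c1 c2 : R) :
  (0 <= c1)%R -> (0 <= c2)%R ->
  measurable_fun setT f -> measurable_fun setT g ->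
  (forall w, 0 <= f w)%R -> (forall w, 0 <= g w)%R ->
  \int[P]_w ((c1 * f w + c2 * g w)%R%:E) =
  c1%:E * \int[P]_w (f w)%:E + c2%:E * \int[P]_w (g w)%:E.
Proof.
move=> c10 c20 mf mg f0 g0.
under eq_integral do rewrite EFinD !EFinM.
rewrite ge0_integralD // ?ge0_integralZl_EFin //.
all: try (by move=> x _; rewrite ?lee_fin ?(mulr_ge0, f0, g0) // -EFinM lee_fin mulr_ge0).
all: try (exact/measurable_EFinP).
all: apply: emeasurable_funM; [exact: measurable_cst | exact/measurable_EFinP].
Qed.

Lemma fin_le (R : realType) (e : \bar R) (c : R) : 0 <= e -> e <= c%:E -> exists r, e = r%:E.
Proof. by case: e => [r| |] //; exists r. Qed.

Lemma fin_lt (R : realType) (e f : \bar R) (c : R) : 0 <= e -> c%:E * e < f -> (0 < c)%R -> exists r, e = r%:E.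
Proof.
case: e => [r| |] //; first by exists r.
by move=> _ + c0; rewrite mulry gtr0_sg ?mul1e //; case: f.
Qed.

Arguments fin_lt {R e f c}.
Arguments fin_le {R e c}.

Lemma int_sc (R : realType) (d : measure_display) (T : measurableType d)
  (P : probability T R) (f : T -> R) (c : R) :
  (0 <= c)%R -> measurable_fun setT f -> (forall w, 0 <= f w)%R ->
  \int[P]_w ((c * f w)%R%:E) = c%:E * \int[P]_w (f w)%:E.
Proof.
move=> c0 mf f0; under eq_integral do rewrite EFinM.
rewrite ge0_integralZl_EFin //; last exact/measurable_EFinP.
by move=> x _; rewrite lee_fin.
Qed.

Theorem lemma3p2 (R : realType) (d : measure_display) (T : measurableType d)
  (P : probability T R) (p : R) (DY DX EY EX : T -> R)
  (lam Th a b nu mu : R) :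
  (1 < p)%R -> (0 < lam)%R -> (0 < Th)%R ->
  (0 < a < 1)%R -> (0 < b < 1)%R -> (0 < nu < 1)%R -> (0 < mu < 1)%R ->
  (* (i) *)
  measurable_fun setT DY -> measurable_fun setT DX ->
  measurable_fun setT EY -> measurable_fun setT EX ->
  (forall w, 0 <= DY w)%R -> (forall w, 0 <= DX w)%R ->
  (forall w, 0 <= EY w)%R -> (forall w, 0 <= EX w)%R ->
  (forall w, DY w <= EY w)%R -> (forall w, DX w <= EX w)%R ->
  (forall w, DY w <= lam `^ p * DX w)%R ->
  (forall w, EY w <= lam `^ p * EX w)%R ->
  (forall w, DY w <= (1 + nu) * Th `^ p * EX w)%R ->
  (* (ii) *)
  ((1 - nu) * Th `^ p)%:E * (\int[P]_w (EX w)%:E) < \int[P]_w (DY w)%:E ->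
  (1 - mu)%:E * (\int[P]_w (EY w)%:E) < \int[P]_w (DY w)%:E ->
  (1 - mu)%:E * (\int[P]_w (EX w)%:E) < \int[P]_w (DX w)%:E ->
  (* (iii) *)
  (lam `^ p * (2 * mu / a + 2 * nu / b) < Th `^ p * (1 - nu))%R ->
  exists w : T,
    [/\ ((1 - a) * EY w < DY w)%R, ((1 - a) * EX w < DX w)%R
      & ((1 - b) * Th `^ p * EX w < DY w)%R].
Proof.
move=> hp hlam hTh /andP[a0 a1] /andP[b0 b1] /andP[nu0 nu1] /andP[mu0 mu1].
move=> mDY mDX mEY mEX DY0 DX0 EY0 EX0 DYEY DXEX DYL EYL DYK h1 h2 h3 h4.
have K0 : (0 < Th `^ p)%R by rewrite powR_gt0.
have L0 : (0 < lam `^ p)%R by rewrite powR_gt0.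
move: h1 h2 h3 h4 DYL EYL DYK.
set K := (Th `^ p)%R; set L := (lam `^ p)%R.
move=> h1 h2 h3 h4 DYL EYL DYK.
apply: contrapT => Hno.
have bK0 : (0 < b * K)%R by rewrite mulr_gt0.
have pw : forall w, (a * b * K * DY w <= b * K * (EY w - DY w)
     + b * K * L * (EX w - DX w) + a * L * ((1 + nu) * K * EX w - DY w))%R.
  move=> w.
  have nw : ~ [/\ ((1 - a) * EY w < DY w)%R, ((1 - a) * EX w < DX w)%R
      & ((1 - b) * K * EX w < DY w)%R] by move=> H; apply: Hno; exists w.
  have t1 : (0 <= b * K * (EY w - DY w))%R.
    by apply: mulr_ge0; [exact: ltW | rewrite subr_ge0].
  have t2 : (0 <= b * K * L * (EX w - DX w))%R.
    by apply: mulr_ge0; [rewrite mulr_ge0 // ltW | rewrite subr_ge0].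
  have t3 : (0 <= a * L * ((1 + nu) * K * EX w - DY w))%R.
    by apply: mulr_ge0; [rewrite mulr_ge0 // ltW | rewrite subr_ge0].
  have DYLX : (DY w <= L * EX w)%R.
    by apply: (le_trans (DYL w)); rewrite ler_wpM2l // ltW.
  case: (ltrP ((1 - a) * EY w) (DY w)) => c1; last first.
    have e1 : (a * DY w <= EY w - DY w)%R.
      by have := ler_wpM2l (ltW a0) (DYEY w); lra.
    have := ler_wpM2l (ltW bK0) e1; lra.
  case: (ltrP ((1 - a) * EX w) (DX w)) => c2; last first.
    have f1 : (a * DY w <= a * (L * EX w))%R by rewrite ler_wpM2l // ltW.
    have f2 : (L * (a * EX w) <= L * (EX w - DX w))%R.
      by rewrite ler_wpM2l ?(ltW L0) //; lra.
    have f3 : (a * DY w <= L * (EX w - DX w))%R by lra.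
    have := ler_wpM2l (ltW bK0) f3; lra.
  case: (ltrP ((1 - b) * K * EX w) (DY w)) => c3; last first.
    have g0 : (0 <= nu * K * EX w)%R by rewrite mulr_ge0 // mulr_ge0 // ltW.
    have g1 : (b * K * EX w <= (1 + nu) * K * EX w - DY w)%R by lra.
    have g2 := ler_wpM2l (ltW L0) g1.
    have g3 := ler_wpM2l (ltW bK0) DYLX.
    have e : (b*K*(L*EX w) = L*(b*K*EX w))%R by rewrite mulrCA.
    have g4 : (b * K * DY w <= L * ((1 + nu) * K * EX w - DY w))%R.
      by rewrite -e in g2; exact: le_trans g3 g2.
    have := ler_wpM2l (ltW a0) g4; lra.
  by exfalso; apply: nw; split.
have IEX0 : 0 <= \int[P]_w (EX w)%:E by apply: integral_ge0 => x _; rewrite lee_fin.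
have IEY0 : 0 <= \int[P]_w (EY w)%:E by apply: integral_ge0 => x _; rewrite lee_fin.
have IDX0 : 0 <= \int[P]_w (DX w)%:E by apply: integral_ge0 => x _; rewrite lee_fin.
have IDY0 : 0 <= \int[P]_w (DY w)%:E by apply: integral_ge0 => x _; rewrite lee_fin.
have IEYL : \int[P]_w (EY w)%:E <= L%:E * \int[P]_w (EX w)%:E.
  rewrite -int_sc //; last exact: ltW.
  apply: ge0_le_integral => //.
  - by move=> x _; rewrite lee_fin.
  - exact/measurable_EFinP.
  - by apply/measurable_EFinP; apply: measurable_funM => //; exact: measurable_cst.
  - by move=> x _; rewrite lee_fin.
have IDYEY : \int[P]_w (DY w)%:E <= \int[P]_w (EY w)%:E.
  apply: ge0_le_integral => //.
  - by move=> x _; rewrite lee_fin.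
  - exact/measurable_EFinP.
  - exact/measurable_EFinP.
  - by move=> x _; rewrite lee_fin.
have IDXEX : \int[P]_w (DX w)%:E <= \int[P]_w (EX w)%:E.
  apply: ge0_le_integral => //.
  - by move=> x _; rewrite lee_fin.
  - exact/measurable_EFinP.
  - exact/measurable_EFinP.
  - by move=> x _; rewrite lee_fin.
have Hmain : \int[P]_w ((a * b * K + b * K + a * L) * DY w + (b * K * L) * DX w)%R%:E
   <= \int[P]_w ((b * K) * EY w + (b * K * L + a * L * (1 + nu) * K) * EX w)%R%:E.
  apply: ge0_le_integral => //.
  - move=> x _; rewrite lee_fin; apply: addr_ge0; apply: mulr_ge0 => //.
    + by rewrite !addr_ge0 // !mulr_ge0 // ltW.
    + by rewrite !mulr_ge0 // ltW.
  - apply/measurable_EFinP; apply: measurable_funD; apply: measurable_funM => //; exact: measurable_cst.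
  - apply/measurable_EFinP; apply: measurable_funD; apply: measurable_funM => //; exact: measurable_cst.
  - by move=> x _; rewrite lee_fin; have := pw x; lra.
rewrite int_lin // in Hmain; try by repeat (apply: addr_ge0 || apply: mulr_ge0); rewrite ?ler01 // ltW.
rewrite int_lin // in Hmain; try by repeat (apply: addr_ge0 || apply: mulr_ge0); rewrite ?ler01 // ltW.
have [X eX] : exists X : R, \int[P]_w (EX w)%:E = X%:E.
  apply: (fin_lt IEX0 h1).
  by rewrite mulr_gt0 // subr_gt0.
rewrite eX in IEYL IDXEX h1 h3 Hmain IEX0.
rewrite -EFinM in IEYL.
have [Y eY] := fin_le IEY0 IEYL.
have [y ey] := fin_le IDY0 (le_trans IDYEY IEYL).
have [x ex] := fin_le IDX0 IDXEX.
rewrite eY in IEYL h2 Hmain IDYEY.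
rewrite ey in h1 h2 Hmain IDYEY.
rewrite ex in h3 Hmain IDXEX.
rewrite -!EFinM -!EFinD lee_fin in Hmain.
rewrite -EFinM lte_fin in h1.
rewrite -EFinM lte_fin in h2.
rewrite -EFinM lte_fin in h3.
rewrite lee_fin in IEYL.
rewrite lee_fin in IEX0.
have a0' : (a != 0)%R by rewrite gt_eqF.
have b0' : (b != 0)%R by rewrite gt_eqF.
have k1 : (b * K * (Y - y) < b * K * (mu * Y))%R by rewrite ltr_pM2l //; lra.
have k2 : (b * K * (mu * Y) <= b * K * (mu * (L * X)))%R.
  by rewrite ler_wpM2l ?(ltW bK0) // ler_wpM2l // ltW.
have bKL0 : (0 < b * K * L)%R by rewrite mulr_gt0.
have aL0 : (0 < a * L)%R by rewrite mulr_gt0.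
have abK0 : (0 < a * b * K)%R by rewrite !mulr_gt0.
have k3 : (b * K * L * (X - x) < b * K * L * (mu * X))%R by rewrite ltr_pM2l //; lra.
have k4 : (a * L * ((1 + nu) * K * X - y) < a * L * (2 * nu * K * X))%R.
  by rewrite ltr_pM2l //; lra.
have k5 := ler_wpM2l (mulr_ge0 (ltW abK0) IEX0) (ltW h4).
have e5 : (a * b * K * X * (L * (2 * mu / a + 2 * nu / b)) =
   K * X * L * (2 * mu * b + 2 * nu * a))%R by field; rewrite a0' b0'.
rewrite e5 in k5.
have k6 : (a * b * K * ((1 - nu) * K * X) < a * b * K * y)%R by rewrite ltr_pM2l.
lra.
Qed.
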